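(* Let $T$ be a triangulation of an unpunctured bordered surface $(S,M)$, $Q=Q_{\overline T}$ its anti-symmetric adjacency quiver, and $F_1,\dots,F_n$ the associated exchange polynomials. If $F_i=F_j$ for some $i\neq j$, then there are no arrows between $i$ and $j$ in $Q$.
   Context: $(S,M)$: compact surface (possibly non-orientable) with nonempty boundary, marked points $M\subset\partial S$ meeting every boundary component, no punctures, not a monogon/digon/triangle. Quasi-arcs: arcs (up to isotopy) not bounding a Möbius strip with one marked point, and one-sided simple closed curves; compatible = disjoint, or the unique arc and one-sided curve in a Möbius strip with one marked point. Triangulation: maximal compatible set without one-sided curves; its arcs are $1,\dots,n$. Double cover and quiver: replace each cross-cap by a cylinder to get $\tilde S$, glue two copies along new cylinder boundaries by the antipodal map (two oppositely oriented copies if $S$ orientable); $T$ lifts to $\overline T$ with lifts $i,\tilde i$ ($\tilde{\tilde i}=i$). $Q_{\overline T}$: vertices arcs (and boundary segments receiving variables) of $\overline T$; arrow $i\to j$ for each triangle where $j$ follows $i$ in the orientation; 2-cycles cancelled; $b_{ij}$ = (arrows $i\to j$) $-$ (arrows $j\to i$). It is anti-symmetric: $i\to j$ iff $\tilde j\to\tilde i$, and no arrows $i\to\tilde i$. $F_j=\prod_{b_{ij}+b_{\tilde ij}>0}x_i^{b_{ij}+b_{\tilde ij}}+\prod_{b_{ij}+b_{\tilde ij}<0}x_i^{-(b_{ij}+b_{\tilde ij})}$ over twin-pair representatives $i$. *)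

(* Defs.v *)
From HB Require Import structures.
From mathcomp Require Import all_boot all_order all_algebra.
From mathcomp Require Import mpoly.
Set Implicit Arguments. Unset Strict Implicit. Unset Printing Implicit Defensive.
Import Order.TTheory GRing.Theory Num.Theory.

(* Combinatorial model of a triangulation T of an unpunctured bordered      *)
(* (possibly non-orientable) surface (S,M): S cut along the arcs of T is a  *)
(* disjoint union of triangles (no punctures => no self-folded triangles).  *)
(* Triangle t has sides k : 'I_3; side k runs from corner k to corner k+1   *)
(* (mod 3) for a chosen local orientation of t.  An arc of T is a pair of   *)
(* sides glued together, either orientation-compatibly (twist = false:     *)
(* corner k <-> corner k'+1, corner k+1 <-> corner k') or with a twist      *)
(* (twist = true: corner k <-> k', k+1 <-> k'+1).  Unpaired sides are the   *)
(* boundary segments; the vertices are the marked points.                   *)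

Record tsurf := TSurf {
  ntri : nat;
  partner : {ffun 'I_ntri * 'I_3 -> option ('I_ntri * 'I_3)};
  twist : {ffun 'I_ntri * 'I_3 -> bool} }.

Notation side S := ('I_(ntri S) * 'I_3)%type.

Section Surf.
Variable S : tsurf.

Definition is_arc (s : side S) : bool := partner S s != None.

Definition tri_adj : rel 'I_(ntri S) :=
  fun t u => [exists k : 'I_3, [exists k' : 'I_3, partner S (t, k) == Some (u, k')]].

(* corner identifications induced by the side gluings; corner (t,v) is     *)
(* vertex v of triangle t *)
Definition corner_rel0 (c d : side S) : bool :=
  [exists s : side S,
    if partner S s is Some s' then
      if twist S s then
        ((c == s) && (d == s')) ||
        ((c == (s.1, ordS s.2)) && (d == (s'.1, ordS s'.2)))
      else
        ((c == s) && (d == (s'.1, ordS s'.2))) ||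
        ((c == (s.1, ordS s.2)) && (d == s'))
    else false].

Definition corner_rel : rel (side S) := fun c d => corner_rel0 c d || corner_rel0 d c.

(* a corner lying on a boundary segment (side v leaves corner v, side v-1  *)
(* enters it) *)
Definition boundary_corner (c : side S) : bool :=
  (partner S c == None) || (partner S (c.1, ord_pred c.2) == None).

(* T is a triangulation of an unpunctured bordered surface (S,M) which is   *)
(* not a monogon, digon or triangle:                                        *)
(*  - T has at least one arc (excludes the triangle; monogon and digon have *)
(*    no triangulation by triangles);                                       *)
(*  - no punctures: every marked point (class of corners) lies on the       *)
(*    boundary;                                                             *)
(*  - arcs are quasi-arcs: no arc bounds a Moebius strip with one marked    *)
(*    point, i.e. a triangle with two of its sides glued to each other     *)
(*    (necessarily with a twist) has its third side on the boundary.        *)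
Definition unpunctured_triangulation : Prop :=
  [/\ (forall s s' : side S, partner S s = Some s' ->
          [/\ partner S s' = Some s, s' <> s & twist S s' = twist S s]),
      (forall t u : 'I_(ntri S), connect tri_adj t u),
      (exists s : side S, is_arc s),
      (forall c : side S, exists2 d, connect corner_rel c d & boundary_corner d)
    & (forall (t : 'I_(ntri S)) (k k' k'' : 'I_3),
          partner S (t, k) = Some (t, k') -> k'' != k -> k'' != k' ->
          partner S (t, k'') = None) ].

(* Double cover \tilde S (orientation double cover; two oppositely oriented *)
(* copies when S is orientable).  Its triangles are pairs (t, e), e : bool  *)
(* the orientation of the lift; lifted sides are (s, e).  The twin map is   *)
(* e |-> ~~ e.  Side (s,e) is glued to (s', e (+) twist s).                 *)
(* A lifted arc/boundary segment of \overline T is a gluing class of lifted *)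
(* sides, represented by any of its members.                                *)

Definition lside := (side S * bool)%type.

Definition lpartner (x : lside) : option lside :=
  if partner S x.1 is Some s' then Some (s', addb x.2 (twist S x.1)) else None.

Definition same_ledge (x y : lside) : bool := (x == y) || (lpartner x == Some y).

Definition twin (x : lside) : lside := (x.1, ~~ x.2).

Definition lnext (x : lside) : lside :=
  ((x.1.1, if x.2 then ord_pred x.1.2 else ordS x.1.2), x.2).

(* number of arrows x -> y of Q_{\overline T} before cancelling 2-cycles:   *)
(* one for each (lifted triangle, position) where y follows x              *)
Definition narrows (x y : lside) : nat :=
  #|[set z : lside | same_ledge x z && same_ledge y (lnext z)]|.

(* Q has exactly |b_{xy}| arrows between x and y, in the direction of sign. *)
Definition bq (x y : lside) : int := ((narrows x y)%:Z - (narrows y x)%:Z)%R.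

(* twin-pair representatives: one side per arc / boundary segment of T     *)
Definition canon (s : side S) : side S :=
  if partner S s is Some s' then
    (if (enum_rank s' < enum_rank s)%N then s' else s)
  else s.
Definition is_rep (s : side S) : bool := canon s == s.

(* B: the boundary segments receiving (frozen) variables *)
Definition has_var (B : {set side S}) (s : side S) : bool := is_arc s || (s \in B).

Definition cexp (y : lside) (s : side S) : int := (bq (s, false) y + bq (s, true) y)%R.

Definition Fexch (B : {set side S}) (y : lside) : {mpoly int[#|{: side S}|]} :=
  (\prod_(s : side S | is_rep s && has_var B s && (0 < cexp y s)%R)
      'X_(enum_rank s) ^+ `|cexp y s|%N)%R
  + (\prod_(s : side S | is_rep s && has_var B s && (cexp y s < 0)%R)
      'X_(enum_rank s) ^+ `|cexp y s|%N)%R.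

Definition Farc (B : {set side S}) (s : side S) := Fexch B (s, false).

End Surf.

Arguments is_arc : clear implicits.
Arguments bq : clear implicits.
Arguments Farc : clear implicits.
Arguments Fexch : clear implicits.
Arguments unpunctured_triangulation : clear implicits.

(* Main.v *)
Require Import Defs.
From HB Require Import structures.
From mathcomp Require Import all_boot all_order all_algebra.
From mathcomp Require Import mpoly.
From mathcomp Require Import zify.
Set Implicit Arguments. Unset Strict Implicit. Unset Printing Implicit Defensive.
Import Order.TTheory GRing.Theory Num.Theory.
Local Open Scope ring_scope.

Lemma X2_eq (n : nat) (a b c d : 'X_{1..n}) :
  ('X_[a] + 'X_[b] : {mpoly int[n]}) = 'X_[c] + 'X_[d] -> (c == a) || (c == b).
Proof.
move=> /(congr1 (fun p => p@_c)); rewrite !mcoeffD !mcoeffX eqxx.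
case Ea: (a == c); first by rewrite (eqP Ea) eqxx.
case Eb: (b == c); first by rewrite (eqP Eb) eqxx orbT.
by case: (d == c).
Qed.

Section Poly.
Lemma Fexch_split (S : tsurf) (B : {set side S}) (y : lside S) :
  Fexch S B y =
  'X_[(\sum_(s : side S | is_rep s && has_var B s && (0 < cexp y s)%R) (U_(enum_rank s) *+ `|cexp y s|%N))%MM]
  + 'X_[(\sum_(s : side S | is_rep s && has_var B s && (cexp y s < 0)%R) (U_(enum_rank s) *+ `|cexp y s|%N))%MM].
Proof. by rewrite /Fexch !mprodXnE. Qed.
End Poly.

Lemma coordM (S : tsurf) (P : pred (side S)) (k : side S -> nat) (s0 : side S) :
  (\sum_(s : side S | P s) (U_(enum_rank s) *+ k s))%MM (enum_rank s0)
  = if P s0 then k s0 else 0%N.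
Proof.
rewrite mnm_sumE.
under eq_bigr => s _ do rewrite mulmnE mnm1E (inj_eq enum_rank_inj).
case: (boolP (P s0)) => Ps0.
  rewrite (bigD1 s0) //= eqxx mul1n big1 ?addn0 // => s /andP[_ /negbTE ->].
  by rewrite mul0n.
rewrite big1 // => s Ps; have /negbTE -> : s != s0.
  by apply: contraNneq Ps0 => <-.
by rewrite mul0n.
Qed.

Lemma cexp_transfer (S : tsurf) (B : {set side S}) (y y' : lside S) (s : side S) :
  Fexch S B y = Fexch S B y' -> is_rep s -> has_var B s -> cexp y s = 0 -> cexp y' s = 0.
Proof.
move=> E rs hs c0; move: E; rewrite !Fexch_split.
set m1 := (X in 'X_[X] + _ = _). set m2 := (X in _ + 'X_[X] = _).
set n1 := (X in _ = 'X_[X] + _). set n2 := (X in _ = _ + 'X_[X]).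
move=> E.
have hn1 : (n1 == m1) || (n1 == m2) by apply: X2_eq E.
have hn2 : (n2 == m1) || (n2 == m2).
  by apply: (@X2_eq _ m1 m2 n2 n1); rewrite E addrC.
have z1 : m1 (enum_rank s) = 0%N by rewrite /m1 coordM c0; case: ifP.
have z2 : m2 (enum_rank s) = 0%N by rewrite /m2 coordM c0; case: ifP.
have w1 : n1 (enum_rank s) = 0%N by case/orP: hn1 => /eqP ->.
have w2 : n2 (enum_rank s) = 0%N by case/orP: hn2 => /eqP ->.
move: w1 w2; rewrite /n1 /n2 !coordM rs hs /=.
by case: ltrgtP => // h; [move=> /eqP | move=> _ /eqP]; rewrite absz_eq0 => /eqP.
Qed.
Lemma twinK (S : tsurf) (x : lside S) : twin (twin x) = x.
Proof. by case: x => ? []. Qed.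

Lemma lpartner_twin (S : tsurf) (x : lside S) :
  lpartner (twin x) = omap (@twin S) (lpartner x).
Proof. by rewrite /lpartner /twin /=; case: (partner S x.1) => //= s'; rewrite addNb. Qed.

Lemma same_twin (S : tsurf) (a b : lside S) :
  same_ledge (twin a) b = same_ledge a (twin b).
Proof.
rewrite /same_ledge lpartner_twin.
have tinj : injective (@twin S) := can_inj (@twinK S).
congr (_ || _).
  by rewrite -{1}(twinK b) (inj_eq tinj).
case: (lpartner a) => [c|] //=.
by rewrite -{1}(twinK b) (inj_eq (@Some_inj _)) ?(inj_eq tinj) //; apply/eqP/eqP => [[->]|->]; rewrite ?twinK.
Qed.

Lemma lnext_twin (S : tsurf) (w : lside S) : lnext (twin (lnext w)) = twin w.
Proof.
case: w => [[t k] []]; rewrite /lnext /twin /=.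
  by rewrite ord_predK.
by rewrite ordSK.
Qed.

Definition phi (S : tsurf) (z : lside S) := twin (lnext z).

Lemma phiK (S : tsurf) : involutive (@phi S).
Proof. by move=> z; rewrite /phi lnext_twin twinK. Qed.

Lemma narrows_twin (S : tsurf) (x y : lside S) :
  narrows x y = narrows (twin y) (twin x).
Proof.
rewrite /narrows -(card_preimset _ (inv_inj (@phiK S))).
apply: eq_card => w; rewrite !inE /phi.
rewrite lnext_twin -same_twin -(twinK y) same_twin twinK andbC.
by rewrite -{2}(twinK (lnext w)) same_twin twinK.
Qed.

Lemma bq_twin (S : tsurf) (x y : lside S) : bq S x y = bq S (twin y) (twin x).
Proof. by rewrite /bq narrows_twin (narrows_twin y x). Qed.

Lemma bqN (S : tsurf) (x y : lside S) : bq S x y = - bq S y x.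
Proof. by rewrite /bq opprB. Qed.

Definition pinv (S : tsurf) := forall s s' : side S, partner S s = Some s' ->
  partner S s' = Some s /\ twist S s' = twist S s.

Lemma lpartnerK (S : tsurf) (Hinv : pinv S) (x x' : lside S) :
  lpartner x = Some x' -> lpartner x' = Some x.
Proof.
rewrite /lpartner; case E: (partner S x.1) => [s'|] // [<-] /=.
have [-> ->] := Hinv _ _ E.
by rewrite -addbA addbb addbF; case: x {E}.
Qed.

Lemma same_partner (S : tsurf) (Hinv : pinv S) (x x' z : lside S) :
  lpartner x = Some x' -> same_ledge x z = same_ledge x' z.
Proof.
move=> E; rewrite /same_ledge E (lpartnerK Hinv E) !(inj_eq (@Some_inj _)).
by rewrite orbC.
Qed.

Lemma bq_l (S : tsurf) (Hinv : pinv S) (x x' y : lside S) :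
  lpartner x = Some x' -> bq S x y = bq S x' y.
Proof.
move=> E; rewrite /bq /narrows.
congr (_%:Z - _%:Z)%R; apply: eq_card => z; rewrite !inE (same_partner _ _ E) //.
Qed.

Lemma cexp_partner (S : tsurf) (Hinv : pinv S) (y : lside S) (s s' : side S) :
  partner S s = Some s' -> cexp y s = cexp y s'.
Proof.
move=> E; rewrite /cexp.
have e1 : lpartner (s, false) = Some (s', twist S s) by rewrite /lpartner /= E.
have e2 : lpartner (s, true) = Some (s', ~~ twist S s) by rewrite /lpartner /= E.
rewrite (bq_l Hinv _ e1) (bq_l Hinv _ e2).
by case: (twist S s) => //=; rewrite addrC.
Qed.

Lemma cexp_canon (S : tsurf) (Hinv : pinv S) (y : lside S) (s : side S) :
  cexp y (canon s) = cexp y s.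
Proof.
rewrite /canon; case E: (partner S s) => [s'|] //; case: ifP => // _.
by rewrite (cexp_partner Hinv y E).
Qed.

Lemma canon_rep (S : tsurf) (Hinv : pinv S) (s : side S) : is_rep (canon s).
Proof.
rewrite /is_rep /canon; case E: (partner S s) => [s'|]; last by rewrite E.
case: ifP => h.
  have [E' _] := Hinv _ _ E.
  by rewrite E' ltnNge ltnW.
by rewrite E h.
Qed.

Lemma canon_var (S : tsurf) (Hinv : pinv S) (B : {set side S}) (s : side S) :
  is_arc S s -> has_var B (canon s).
Proof.
rewrite /has_var /is_arc /canon; case E: (partner S s) => [s'|] // _.
have [E' _] := Hinv _ _ E.
by case: ifP; rewrite ?E' ?E.
Qed.

Definition in2 (S : tsurf) (u pu a : side S) := (a == u) || (a == pu).

Lemma cls_closed (S : tsurf) (Hinv : pinv S) (u pu : side S) (x z : lside S) :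
  partner S u = Some pu -> in2 u pu x.1 -> same_ledge x z -> in2 u pu z.1.
Proof.
move=> Pu hx; rewrite /same_ledge; case/orP => [/eqP <- //|].
rewrite /lpartner; case E: (partner S x.1) => [s'|] //= /eqP [<-] /=.
have [E' _] := Hinv _ _ Pu.
by case/orP: hx => /eqP ex; rewrite ex ?Pu ?E' in E; case: E => <-; rewrite /in2 eqxx ?orbT.
Qed.

Lemma lnext_side (S : tsurf) (z : lside S) :
  (lnext z).1.1 = z.1.1 /\ (lnext z).1 != z.1.
Proof.
split; first by [].
case: z => [[t k] e]; apply/eqP => /(congr1 (fun p : side S => val p.2)).
by case: e; case: k => [[|[|[|k]]] hk].
Qed.

Arguments cls_closed [S] Hinv [u pu x z].

Lemma narrows_wit (S : tsurf) (Hinv : pinv S) (u pu w pw : side S) (x y : lside S) :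
  partner S u = Some pu -> partner S w = Some pw -> in2 u pu x.1 -> in2 w pw y.1 ->
  narrows x y != 0%N ->
  exists a b, [/\ in2 u pu a, in2 w pw b, a.1 = b.1 & a != b].
Proof.
move=> Pu Pw hx hy; rewrite /narrows cards_eq0 => /set0Pn [z]; rewrite inE => /andP [h1 h2].
have [e1 e2] := lnext_side z.
exists z.1, (lnext z).1; split.
- by have := cls_closed Hinv Pu hx h1.
- by have := cls_closed Hinv Pw hy h2.
- by rewrite e1.
- by rewrite eq_sym.
Qed.

Arguments narrows_wit [S] Hinv [u pu w pw x y].

Lemma self_zero (S : tsurf) (Hinv : pinv S) (u pu : side S) (x y : lside S) :
  partner S u = Some pu -> pu.1 != u.1 -> in2 u pu x.1 -> in2 u pu y.1 ->
  narrows x y = 0%N.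
Proof.
move=> Pu Hne hx hy; apply/eqP; apply: contraNT Hne => /(narrows_wit Hinv Pu Pu hx hy).
case=> a [b [ha hb e ne]].
by move: ha hb ne e => /orP[]/eqP-> /orP[]/eqP->; rewrite ?eqxx //= => _ ->.
Qed.

Definition nofold (S : tsurf) := forall (t : 'I_(ntri S)) (k k' k'' : 'I_3),
  partner S (t, k) = Some (t, k') -> k'' != k -> k'' != k' -> partner S (t, k'') = None.

Lemma foldA (S : tsurf) (Hinv : pinv S) (H5 : nofold S) (u pu w pw b : side S) :
  partner S u = Some pu -> pu.1 = u.1 -> partner S w = Some pw ->
  ~~ in2 u pu w -> ~~ in2 u pu pw -> in2 w pw b -> b.1 != u.1.
Proof.
move=> Pu e Pw nw npw hb; apply/negP => /eqP eb.
have [Pw' _] := Hinv _ _ Pw.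
have nb : ~~ in2 u pu b by case/orP: hb => /eqP ->.
have Pb : partner S b != None by case/orP: hb => /eqP ->; rewrite ?Pw ?Pw'.
clear hb nw npw.
move: u pu b Pu e nb Pb eb => [t k] [t0 k0] [tb kb] /= Pu e nb Pb eb; subst.
move: nb; rewrite /in2 !xpair_eqE eqxx /= negb_or => /andP [n1 n2].
by rewrite (H5 _ _ _ _ Pu n1 n2) in Pb.
Qed.

Arguments foldA [S] Hinv H5 [u pu w pw b].

Lemma zeroA (S : tsurf) (Hinv : pinv S) (H5 : nofold S) (u pu w pw : side S) (x y : lside S) :
  partner S u = Some pu -> pu.1 = u.1 -> partner S w = Some pw ->
  ~~ in2 u pu w -> ~~ in2 u pu pw -> in2 u pu x.1 -> in2 w pw y.1 ->
  narrows x y = 0%N /\ narrows y x = 0%N.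
Proof.
move=> Pu e Pw nw npw hx hy.
have Au : forall a, in2 u pu a -> a.1 = u.1 by move=> a /orP[]/eqP->.
split; apply/eqP/negP => /negP.
  move=> /(narrows_wit Hinv Pu Pw hx hy) [a [b [ha hb eab _]]].
  by move: (foldA Hinv H5 Pu e Pw nw npw hb); rewrite -eab (Au _ ha) eqxx.
move=> /(narrows_wit Hinv Pw Pu hy hx) [a [b [ha hb eab _]]].
by move: (foldA Hinv H5 Pu e Pw nw npw ha); rewrite eab (Au _ hb) eqxx.
Qed.

Theorem lemma4p13 (S : tsurf) (B : {set side S}) (i j : side S) :
  unpunctured_triangulation S ->
  is_arc S i -> is_arc S j ->
  i != j -> partner S i != Some j ->
  Farc S B i = Farc S B j ->
  forall ei ej : bool, bq S (i, ei) (j, ej) = 0%R.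
Proof.
move=> [H1 _ _ _ H5] ai aj nij npij E.
have Hinv : pinv S by move=> s s' h; have [? _ ?] := H1 s s' h.
have H5' : nofold S by [].
rewrite /is_arc in ai aj.
case Pi: (partner S i) ai => [pi|] // _.
case Pj: (partner S j) aj => [pj|] // _.
have [Pi' _] := Hinv _ _ Pi.
have [Pj' _] := Hinv _ _ Pj.
rewrite Pi in npij.
have d1 : ~~ in2 i pi j.
  rewrite /in2 negb_or eq_sym nij /=; apply: contra npij => /eqP ->; by [].
have d2 : ~~ in2 i pi pj.
  rewrite /in2 negb_or; apply/andP; split; apply/negP => /eqP e.
    by move: npij; rewrite -Pi -e Pj' eqxx.
  by move: nij; have := Pj'; rewrite e Pi' => -[->] /eqP [].
have d3 : ~~ in2 j pj i.
  rewrite /in2 negb_or nij /=; apply/negP => /eqP e.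
  by move: npij; rewrite -Pi e Pj' eqxx.
have d4 : ~~ in2 j pj pi.
  rewrite /in2 negb_or; apply/andP; split; apply/negP => /eqP e.
    by move: npij; rewrite e eqxx.
  by move: nij; have := Pi'; rewrite e Pj' => -[->] /eqP [].
have hi : forall b : bool, in2 i pi (i, b).1 by move=> b; rewrite /in2 /= eqxx.
have hj : forall b : bool, in2 j pj (j, b).1 by move=> b; rewrite /in2 /= eqxx.
case: (eqVneq pi.1 i.1) => [ei1|nei].
  move=> ei ej; rewrite /bq.
  have [-> ->] := zeroA Hinv H5' Pi ei1 Pj d1 d2 (hi ei) (hj ej).
  by rewrite subrr.
case: (eqVneq pj.1 j.1) => [ej1|nej].
  move=> ei ej; rewrite /bq.
  have [-> ->] := zeroA Hinv H5' Pj ej1 Pi d3 d4 (hj ej) (hi ei).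
  by rewrite subrr.
have ci : cexp (i, false) (canon i) = 0.
  rewrite cexp_canon // /cexp /bq.
  by rewrite !(self_zero Hinv Pi nei (hi _) (hi _)).
have cj : cexp (j, false) (canon j) = 0.
  rewrite cexp_canon // /cexp /bq.
  by rewrite !(self_zero Hinv Pj nej (hj _) (hj _)).
rewrite /Farc in E.
have ai' : is_arc S i by rewrite /is_arc Pi.
have aj' : is_arc S j by rewrite /is_arc Pj.
have h1 := cexp_transfer E (canon_rep Hinv i) (@canon_var S Hinv B i ai') ci.
have h2 := cexp_transfer (esym E) (canon_rep Hinv j) (@canon_var S Hinv B j aj') cj.
rewrite cexp_canon // /cexp in h1.
rewrite cexp_canon // /cexp in h2.
rewrite (bqN (j, false)) (bq_twin (j, true)) /twin /= in h2.
have a0 : bq S (i, false) (j, false) = 0 by lia.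
have c0 : bq S (i, true) (j, false) = 0 by lia.
case; case.
- by rewrite bq_twin /twin /= bqN a0 oppr0.
- exact: c0.
- by rewrite bq_twin /twin /= bqN c0 oppr0.
- exact: a0.
Qed.
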